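(* For every positive integer $n$ there exist a present-bias parameter $b>1$, an instance $G$ with $O(n)$ vertices, and a set $S$ of $2^n$ distinct rewards such that for each reward $R\in S$ placed at $t$ the sophisticated agent (with abandonment) reaches $t$, and the paths it traverses for different rewards in $S$ are pairwise distinct. In particular the number of distinct paths taken as the reward varies is exponential in the size of the graph.
   Context: An instance is a finite directed acyclic graph $G=(V,E)$ with nonnegative edge costs $c(u,v)$, start node $s$ and target node $t$, where $t$ is the unique node with no outgoing edges. Sophisticated agent with bias $b$ and reward $R$ at $t$, which may abandon: process nodes in reverse topological order; $t$ is never abandoned and $C_R(t)=0$. For $u\neq t$, among out-edges $(u,v)$ with $v$ not abandoned let $P(u,v)=b\,c(u,v)+C_R(v)$; if none exists or all have $P(u,v)>R$, $u$ is abandoned; otherwise the agent at $u$ moves to $v^*(u)\in\arg\min P(u,v)$ and $C_R(u)=c(u,v^*(u))+C_R(v^*(u))$. The agent reaches $t$ iff $s$ is not abandoned, following $s,v^*(s),\dots,t$. *)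

(* Defs.v *)
From Stdlib Require Import Reals List Relations.
Import ListNotations.
Open Scope R_scope.

(* An instance: vertices are the naturals 0 .. nV-1, a directed edge
   relation, a cost function (meaningful on edges), start s and target t. *)
Record instance := Instance {
  nV   : nat;
  edge : nat -> nat -> Prop;
  cost : nat -> nat -> R;
  src  : nat;
  tgt  : nat
}.

Definition well_formed (G : instance) : Prop :=
  (forall u v, edge G u v -> (u < nV G)%nat /\ (v < nV G)%nat) /\
  (forall u v, edge G u v -> 0 <= cost G u v) /\
  (forall u, ~ clos_trans nat (edge G) u u) /\
  (src G < nV G)%nat /\ (tgt G < nV G)%nat /\
  (forall v, ~ edge G (tgt G) v) /\
  (forall u, (u < nV G)%nat -> u <> tgt G -> exists v, edge G u v).

(* [agent_run G b R aband next C] : the data (abandoned set, chosen successor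
   v*(u), perceived-cost C_R(u)) is a valid outcome of the backward-induction
   process of the sophisticated agent with bias b and reward R (with
   abandonment).  Since each node's data depends only on its successors, this
   fixed-point specification is exactly the reverse-topological-order
   procedure, with an arbitrary choice among minimizers of P(u,.). *)
Definition agent_run (G : instance) (b Rw : R)
    (aband : nat -> Prop) (next : nat -> nat) (C : nat -> R) : Prop :=
  ~ aband (tgt G) /\ C (tgt G) = 0 /\
  forall u, (u < nV G)%nat -> u <> tgt G ->
    let P := fun v => b * cost G u v + C v in
    (aband u <-> (forall v, edge G u v -> ~ aband v -> P v > Rw)) /\
    (~ aband u ->
       edge G u (next u) /\ ~ aband (next u) /\
       (forall v, edge G u v -> ~ aband v -> P (next u) <= P v) /\
       C u = cost G u (next u) + C (next u)).

Inductive follows (next : nat -> nat) (t : nat) : nat -> list nat -> Prop :=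
  | follows_end : follows next t t [t]
  | follows_step : forall u p, u <> t -> follows next t (next u) p ->
      follows next t u (u :: p).

(* Main.v *)
Require Import Defs.
From Stdlib Require Import Reals List Relations.
From Stdlib Require Import Arith Lia Lra FinFun.
Import ListNotations.
Open Scope R_scope.

Definition cn (n u v : nat) : nat :=
  if Nat.leb u n then (if Nat.eqb v (S u) then 4 * 2 ^ u else 2 ^ u)%nat
  else (5 * 2 ^ (u - n - 1))%nat.

Definition edgeR (n u v : nat) : Prop :=
  ((u < n)%nat /\ (v = S u \/ v = (n + 1 + u)%nat)) \/
  ((n < u)%nat /\ (u < 2 * n + 1)%nat /\ v = (u - n)%nat).

Definition Gn (n : nat) : instance :=
  Instance (2 * n + 1) (edgeR n) (fun u v => INR (cn n u v)) 0 n.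

Lemma cn_bot n i : (i < n)%nat -> cn n i (S i) = (4 * 2 ^ i)%nat.
Proof.
  intro H; unfold cn. destruct (Nat.leb_spec i n); [|lia].
  rewrite Nat.eqb_refl. reflexivity.
Qed.

Lemma cn_top n i : (1 <= n)%nat -> (i < n)%nat -> cn n i (n + 1 + i) = (2 ^ i)%nat.
Proof.
  intros H1 H; unfold cn. destruct (Nat.leb_spec i n); [|lia].
  destruct (Nat.eqb_spec (n + 1 + i) (S i)); [lia|reflexivity].
Qed.

Lemma cn_a n i : cn n (n + 1 + i) (S i) = (5 * 2 ^ i)%nat.
Proof.
  unfold cn. destruct (Nat.leb_spec (n + 1 + i) n); [lia|].
  replace (n + 1 + i - n - 1)%nat with i by lia. reflexivity.
Qed.

Definition rank (n u : nat) : nat :=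
  if Nat.leb u n then (2 * u)%nat else (2 * (u - n - 1) + 1)%nat.

Lemma rank_edge n u v : edgeR n u v -> (rank n u < rank n v)%nat.
Proof.
  unfold rank, edgeR; intros [[H [-> | ->]] | [H1 [H2 ->]]];
  repeat match goal with |- context [Nat.leb ?a ?b] => destruct (Nat.leb_spec a b) end; lia.
Qed.

Lemma wf_Gn n : (1 <= n)%nat -> well_formed (Gn n).
Proof.
  intro Hn. unfold well_formed, Gn; simpl.
  split; [unfold edgeR; intros u v H; lia|].
  split; [intros; apply pos_INR|].
  split.
  { intros u H.
    assert (forall x y, clos_trans nat (edgeR n) x y -> (rank n x < rank n y)%nat) as HH.
    { intros x y Hc; induction Hc; [apply rank_edge; auto| lia]. }
    apply HH in H; lia. }
  split; [lia|]. split; [lia|].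
  split; [unfold edgeR; intros v H; lia|].
  intros u H1 H2. unfold edgeR.
  destruct (Nat.lt_ge_cases u n).
  - exists (S u); left; auto.
  - exists (u - n)%nat; right; lia.
Qed.

Definition bit (i k : nat) : nat := ((k / 2 ^ i) mod 2)%nat.

Lemma bit_lt i k : (bit i k < 2)%nat.
Proof. unfold bit; apply Nat.mod_upper_bound; lia. Qed.

Lemma mod_S k i : (k mod 2 ^ (S i) = k mod 2 ^ i + 2 ^ i * bit i k)%nat.
Proof.
  unfold bit. rewrite Nat.pow_succ_r', Nat.mul_comm. apply Nat.Div0.mod_mul_r.
Qed.

Definition X (n k i : nat) : nat :=
  (4 * 2 ^ n + 2 * k - (4 * 2 ^ i + 2 * (k mod 2 ^ i)))%nat.

Lemma pow_le i n : (i <= n)%nat -> (2 ^ i <= 2 ^ n)%nat.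
Proof. intro; apply Nat.pow_le_mono_r; lia. Qed.

Lemma INR2 : INR 2 = 2.
Proof. simpl; lra. Qed.

Section Run.
Variables (n k : nat) (ab : nat -> Prop) (nx : nat -> nat) (C : nat -> R).
Hypothesis Hn : (1 <= n)%nat.
Hypothesis Hk : (k < 2 ^ n)%nat.
Hypothesis Hrun : agent_run (Gn n) (INR 2) (INR (4 * 2 ^ n + 2 * k + 1)) ab nx C.

Definition stepfacts (i : nat) : Prop :=
  (bit i k = 1%nat -> nx i = (n + 1 + i)%nat /\ nx (n + 1 + i)%nat = S i) /\
  (bit i k = 0%nat -> nx i = S i).

Lemma gadget i : (i < n)%nat -> ~ ab (S i) -> C (S i) = INR (X n k (S i)) ->
  ~ ab i /\ C i = INR (X n k i) /\ stepfacts i.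
Proof.
  intros Hi Hab HC.
  destruct Hrun as [_ [_ Hu]].
  assert (Hpi : (2 ^ S i <= 2 ^ n)%nat) by (apply pow_le; lia).
  rewrite Nat.pow_succ_r' in Hpi.
  assert (Hmk : (k mod 2 ^ i <= k)%nat) by apply Nat.Div0.mod_le.
  assert (Hml : (k mod 2 ^ i < 2 ^ i)%nat) by (apply Nat.mod_upper_bound; apply Nat.pow_nonzero; lia).
  assert (HXS : X n k (S i) = (4 * 2 ^ n + 2 * k - (8 * 2 ^ i + 2 * (k mod 2 ^ i + 2 ^ i * bit i k)))%nat).
  { unfold X. rewrite mod_S, Nat.pow_succ_r'. f_equal. lia. }
  assert (Hmsk : (k mod 2 ^ S i <= k)%nat) by apply Nat.Div0.mod_le.
  rewrite mod_S in Hmsk.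
  pose proof (bit_lt i k) as Hb.
  pose proof (Hu (n + 1 + i)%nat ltac:(simpl; lia) ltac:(simpl; lia)) as Ha.
  pose proof (Hu i ltac:(simpl; lia) ltac:(simpl; lia)) as Hv.
  cbv zeta in Ha, Hv. unfold Gn in Ha, Hv; cbn [nV edge cost tgt] in Ha, Hv.
  destruct Ha as [Ha1 Ha2]. destruct Hv as [Hv1 Hv2].
  assert (Hbot : ~ (INR 2 * INR (cn n i (S i)) + C (S i) > INR (4 * 2 ^ n + 2 * k + 1))).
  { rewrite cn_bot, HC, HXS by lia. rewrite <- mult_INR, <- plus_INR.
    intro H; apply INR_lt in H. destruct (bit i k) as [|[|]]; lia. }
  assert (Hnab : ~ ab i).
  { intro H. pose proof (proj1 Hv1 H) as H'. apply Hbot. apply (H' (S i)); auto. unfold edgeR; left; auto. }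
  destruct (Hv2 Hnab) as [He [Hnn [Hmin HCi]]].
  destruct (Nat.eq_dec (bit i k) 1) as [Hb1 | Hb0].
  -
    assert (Hna : ~ ab (n + 1 + i)%nat).
    { intro H0. pose proof (proj1 Ha1 H0) as H. specialize (H (S i)).
      assert (Hed : edgeR n (n + 1 + i) (S i)) by (unfold edgeR; right; lia).
      specialize (H Hed Hab). rewrite cn_a, HC, HXS in H.
      rewrite <- mult_INR, <- plus_INR in H. apply INR_lt in H. rewrite Hb1 in H. lia. }
    destruct (Ha2 Hna) as [Hea [_ [_ HCa]]].
    assert (Hnxa : nx (n + 1 + i)%nat = S i) by (unfold edgeR in Hea; lia).
    rewrite Hnxa, cn_a, HC in HCa.
    assert (Hnxi : nx i = (n + 1 + i)%nat).
    { unfold edgeR in He. destruct He as [[_ [Hx | Hx]] | Hx]; [|auto|lia].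
      exfalso. specialize (Hmin (n + 1 + i)%nat ltac:(unfold edgeR; left; auto) Hna).
      rewrite Hx, HCa, cn_bot, cn_top, HC in Hmin by lia.
      rewrite <- !plus_INR, <- !mult_INR, <- !plus_INR in Hmin.
      apply INR_le in Hmin. lia. }
    split; [auto|]. split.
    + rewrite HCi, Hnxi, HCa, cn_top by lia. rewrite <- !plus_INR. f_equal.
      rewrite HXS, Hb1. unfold X. lia.
    + split; [auto| intro; lia].
  - assert (Hb0' : bit i k = 0%nat) by lia.
    assert (Hab' : ab (n + 1 + i)%nat).
    { apply (proj2 Ha1). intros v Hev _. unfold edgeR in Hev.
      assert (v = S i) by lia. subst v.
      rewrite cn_a, HC, HXS, Hb0'. rewrite <- mult_INR, <- plus_INR.
      apply lt_INR. lia. }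
    assert (Hnxi : nx i = S i).
    { unfold edgeR in He. destruct He as [[_ [Hx | Hx]] | Hx]; [auto| |lia].
      rewrite Hx in Hnn; contradiction. }
    split; [auto|]. split.
    + rewrite HCi, Hnxi, cn_bot, HC by lia. rewrite <- plus_INR. f_equal.
      rewrite HXS, Hb0'. unfold X. lia.
    + split; [intro; lia| auto].
Qed.

Lemma run_all m : (m <= n)%nat ->
  ~ ab (n - m)%nat /\ C (n - m)%nat = INR (X n k (n - m)) /\
  (forall j, (n - m <= j < n)%nat -> stepfacts j).
Proof.
  induction m as [|m IH]; intro Hm.
  - destruct Hrun as [Ht [Ct _]]. unfold Gn in Ht, Ct; cbn [tgt] in Ht, Ct.
    rewrite Nat.sub_0_r. split; [auto|]. split; [|intros; lia].
    rewrite Ct. unfold X. rewrite Nat.mod_small by auto.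
    replace (4 * 2 ^ n + 2 * k - (4 * 2 ^ n + 2 * k))%nat with 0%nat by lia. reflexivity.
  - destruct (IH ltac:(lia)) as [A [B D]].
    replace (n - m)%nat with (S (n - S m)) in A, B by lia.
    destruct (gadget (n - S m) ltac:(lia) A B) as [A' [B' D']].
    split; [auto|]. split; [auto|].
    intros j Hj. destruct (Nat.eq_dec j (n - S m)); [subst; auto|]. apply D; lia.
Qed.

Lemma path_lemma : forall u p, follows nx n u p ->
  ((u <= n)%nat -> forall i, In (n + 1 + i)%nat p <-> ((u <= i < n)%nat /\ bit i k = 1%nat)) /\
  (forall j, (j < n)%nat -> u = (n + 1 + j)%nat -> bit j k = 1%nat ->
     forall i, In (n + 1 + i)%nat p <-> ((j <= i < n)%nat /\ bit i k = 1%nat)).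
Proof.
  intros u p Hf. induction Hf as [|u p Hun Hf IH].
  - split.
    + intros _ i. simpl. split; [intros [H|[]]; lia| lia].
    + intros j _ Hj; lia.
  - destruct IH as [IH1 IH2]. split.
    + intros Hu i. assert (Hu' : (u < n)%nat) by lia.
      destruct (run_all n ltac:(lia)) as [_ [_ D]].
      rewrite Nat.sub_diag in D. destruct (D u ltac:(lia)) as [S1 S0].
      pose proof (bit_lt u k).
      destruct (Nat.eq_dec (bit u k) 1) as [Hb|Hb].
      * destruct (S1 Hb) as [E1 E2]. rewrite E1 in Hf, IH2.
        specialize (IH2 u Hu' eq_refl Hb i). simpl. rewrite IH2.
        split; [intros [H3|H3]; lia|].
        intros [H1 H2]. right. split; auto.
      * assert (Hb0 : bit u k = 0%nat) by lia.
        rewrite (S0 Hb0) in IH1. specialize (IH1 ltac:(lia) i). simpl. rewrite IH1.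
        split; [intros [H3|H3]; lia|].
        intros [H1 H2]. right. destruct (Nat.eq_dec i u); [subst; lia|]. split; [lia|auto].
    + intros j Hj Hu Hb i.
      destruct (run_all n ltac:(lia)) as [_ [_ D]].
      rewrite Nat.sub_diag in D. destruct (D j ltac:(lia)) as [S1 _].
      destruct (S1 Hb) as [_ E2]. rewrite Hu, E2 in Hf. rewrite Hu, E2 in IH1.
      specialize (IH1 ltac:(lia) i). simpl. rewrite IH1.
      split.
      * intros [H3|H3]; [assert (i = j) by lia; subst; split; [lia|auto]|].
        destruct H3; split; [lia|auto].
      * intros [H1 H2]. destruct (Nat.eq_dec i j); [left; lia|right; split; [lia|auto]].
Qed.

End Run.

Lemma bits_eq n k1 k2 : (k1 < 2 ^ n)%nat -> (k2 < 2 ^ n)%nat ->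
  (forall i, (i < n)%nat -> bit i k1 = bit i k2) -> k1 = k2.
Proof.
  intros H1 H2 H.
  assert (forall i, (i <= n)%nat -> k1 mod 2 ^ i = k2 mod 2 ^ i)%nat.
  { induction i; intro Hi.
    - rewrite Nat.pow_0_r, !Nat.mod_1_r. reflexivity.
    - rewrite !mod_S, IHi, H by lia. reflexivity. }
  specialize (H0 n (le_n n)). rewrite !Nat.mod_small in H0 by auto. auto.
Qed.

Theorem theorem3 :
  exists K : nat, forall n : nat, (1 <= n)%nat ->
    exists (b : R) (G : instance) (S : list R),
      1 < b /\ well_formed G /\ (nV G <= K * n)%nat /\
      length S = (2 ^ n)%nat /\ NoDup S /\
      (* for every reward in S, the agent reaches t (s is not abandoned) *)
      (forall Rw, In Rw S ->
         forall aband next C, agent_run G b Rw aband next C ->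
           ~ aband (src G)) /\
      (* the traversed paths for different rewards are distinct *)
      (forall R1 R2, In R1 S -> In R2 S -> R1 <> R2 ->
         forall ab1 nx1 C1 ab2 nx2 C2 p1 p2,
           agent_run G b R1 ab1 nx1 C1 -> agent_run G b R2 ab2 nx2 C2 ->
           follows nx1 (tgt G) (src G) p1 -> follows nx2 (tgt G) (src G) p2 ->
           p1 <> p2).
Proof.
  exists 3%nat. intros n Hn.
  exists (INR 2), (Gn n), (map (fun k => INR (4 * 2 ^ n + 2 * k + 1)) (seq 0 (2 ^ n))).
  split; [rewrite INR2; lra|].
  split; [apply wf_Gn; auto|].
  split; [simpl; lia|].
  split; [rewrite length_map, length_seq; reflexivity|].
  split.
  { apply Injective_map_NoDup; [|apply seq_NoDup].
    intros x y H. apply INR_eq in H. lia. }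
  split.
  { intros Rw HR ab nx C Hr. apply in_map_iff in HR. destruct HR as [k [Ek Hk]].
    apply in_seq in Hk. subst Rw.
    destruct (run_all n k ab nx C Hn ltac:(lia) Hr n (le_n n)) as [A _].
    rewrite Nat.sub_diag in A. exact A. }
  intros R1 R2 HR1 HR2 Hne ab1 nx1 C1 ab2 nx2 C2 p1 p2 Hr1 Hr2 Hf1 Hf2 Heq.
  apply in_map_iff in HR1. destruct HR1 as [k1 [E1 Hk1]].
  apply in_map_iff in HR2. destruct HR2 as [k2 [E2 Hk2]].
  apply in_seq in Hk1, Hk2. subst R1 R2. apply Hne. f_equal.
  assert (k1 = k2); [|subst; reflexivity].
  apply (bits_eq n); try lia.
  intros i Hi. simpl in Hf1, Hf2.
  destruct (path_lemma n k1 ab1 nx1 C1 Hn ltac:(lia) Hr1 0 p1 Hf1) as [P1 _].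
  destruct (path_lemma n k2 ab2 nx2 C2 Hn ltac:(lia) Hr2 0 p2 Hf2) as [P2 _].
  specialize (P1 ltac:(lia) i). specialize (P2 ltac:(lia) i).
  subst p2.
  pose proof (bit_lt i k1). pose proof (bit_lt i k2).
  destruct (Nat.eq_dec (bit i k1) 1) as [B1|B1];
  destruct (Nat.eq_dec (bit i k2) 1) as [B2|B2]; try lia.
  - exfalso. apply B2. apply P2, P1. split; [lia|auto].
  - exfalso. apply B1. apply P1, P2. split; [lia|auto].
Qed.
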